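(* Let $m\ge 2$ and $n\ge 1$ be integers and let $\mathcal P=(p_{i_1 i_2\dots i_m})\in\mathbb R^{[m,n]}$ be a transition probability tensor, i.e. $p_{i_1 i_2\dots i_m}\ge 0$ for all indices and $\sum_{i_1=1}^n p_{i_1 i_2\dots i_m}=1$ for all $(i_2,\dots,i_m)$. Let $R\in\mathbb R^{n\times n^{m-1}}$ be the flattening of $\mathcal P$ along the first index, and let $\mathbf{x}\in\mathbb R^n$ be a non-negative vector with $e^T\mathbf{x}\le 1$, where $e=(1,\dots,1)^T\in\mathbb R^n$. Let $\alpha\ge 0$. Then the $n\times n$ matrix $$-J(\mathbf{x}) = I-\alpha R\Big(I\otimes \mathbf{x}\otimes\cdots\otimes\mathbf{x}+\mathbf{x}\otimes I\otimes\mathbf{x}\otimes\cdots\otimes\mathbf{x}+\cdots+\mathbf{x}\otimes\cdots\otimes\mathbf{x}\otimes I\Big)$$ is non-singular whenever $\alpha<\frac{1}{m-1}$.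
   Context: $I$ denotes the $n\times n$ identity matrix and $\otimes$ the Kronecker product. Each summand inside the parentheses is a Kronecker product of $m-1$ factors, exactly one of which is $I$ and the remaining $m-2$ of which are $\mathbf{x}$ (viewed as an $n\times 1$ matrix); there are $m-1$ summands, one for each position of $I$, so each summand is an $n^{m-1}\times n$ matrix. The flattening $R$ along the first index is the $n\times n^{m-1}$ matrix whose column indexing is compatible with the Kronecker product, i.e. for all $y^{(2)},\dots,y^{(m)}\in\mathbb R^n$, $\big(R(y^{(2)}\otimes\cdots\otimes y^{(m)})\big)_i=\sum_{i_2,\dots,i_m=1}^n p_{i i_2\dots i_m}\,y^{(2)}_{i_2}\cdots y^{(m)}_{i_m}$. *)

(* Defs.v *)
From mathcomp Require Import all_boot all_order all_algebra.
Set Implicit Arguments. Unset Strict Implicit. Unset Printing Implicit Defensive.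
Import Order.TTheory GRing.Theory Num.Theory.
Local Open Scope ring_scope.

(* An order-m, dimension-n tensor p_{i1 i2 ... im} is represented as a function
   P i t where i : 'I_n is the first index i1 and t : {ffun 'I_(m.-1) -> 'I_n}
   is the tuple (i2,...,im) of remaining indices (t k = i_{k+2}).
   With this representation, the flattening R along the first index is the
   n x n^(m-1) "matrix" R i t = P i t, its columns indexed by (m-1)-tuples. *)
Definition tensor (R : Type) (m n : nat) := 'I_n -> {ffun 'I_(m.-1) -> 'I_n} -> R.

Definition flattening (R : Type) (m n : nat) (P : tensor R m n) :
  'I_n -> {ffun 'I_(m.-1) -> 'I_n} -> R := fun i t => P i t.

Definition transition_tensor (R : numDomainType) (m n : nat) (P : tensor R m n) :=
  (forall i t, 0 <= P i t) /\ (forall t, \sum_(i < n) P i t = 1).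

(* Entry (t, j) of the n^(m-1) x n Kronecker product  F_0 (x) ... (x) F_(m-2)
   where F_k = I (n x n) and F_l = x (n x 1) for l <> k; rows are indexed by the
   (m-1)-tuple t of row indices of the factors (compatible with the flattening),
   and the column index is j (the column indices of the x factors being trivial). *)
Definition kron_summand (R : numDomainType) (m n : nat) (x : 'cV[R]_n)
  (k : 'I_(m.-1)) (t : {ffun 'I_(m.-1) -> 'I_n}) (j : 'I_n) : R :=
  \prod_(l < m.-1) (if l == k then (t l == j)%:R else x (t l) 0).

Definition RKsum (R : numDomainType) (m n : nat) (P : tensor R m n) (x : 'cV[R]_n)
  : 'M[R]_n :=
  \matrix_(i < n, j < n)
     \sum_(t : {ffun 'I_(m.-1) -> 'I_n})
        flattening P i t * (\sum_(k < m.-1) kron_summand x k t j).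

Definition minusJ (R : numDomainType) (m n : nat) (P : tensor R m n) (x : 'cV[R]_n)
  (alpha : R) : 'M[R]_n :=
  1%:M - alpha *: RKsum P x.

(* Main.v *)
Require Import Defs.
From mathcomp Require Import all_boot all_order all_algebra.
Import Order.TTheory GRing.Theory Num.Theory.
Local Open Scope ring_scope.

Lemma dd_unit (R : realFieldType) n (A : 'M[R]_n) c :
  (forall i j, 0 <= A i j) -> c < 1 -> (forall j, \sum_i A i j <= c) ->
  (1%:M - A) \in unitmx.
Proof.
move=> A0 c1 Hc.
rewrite -unitmx_tr -row_free_unit; apply: inj_row_free => v Hv.
have Hk k : v 0 k = \sum_i A k i * v 0 i.
  have := congr1 (fun M : 'rV_n => M 0 k) Hv.
  rewrite !mxE => H.
  have E : \sum_j v 0 j * (1%:M - A)^T j k = v 0 k - \sum_i A k i * v 0 i.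
    under eq_bigr => i _ do rewrite !mxE mulrBr.
    rewrite sumrB (bigD1 k) //= eqxx mulr1 big1 ?addr0.
      by congr (_ - _); apply: eq_bigr => i _; rewrite mulrC.
    by move=> i /negbTE ik; rewrite eq_sym ik mulr0.
  by apply/eqP; rewrite -subr_eq0 -E H.
set S := \sum_k `|v 0 k|.
have S0 : 0 <= S by apply: sumr_ge0 => k _.
have HS : S <= c * S.
  apply: le_trans (_ : \sum_k \sum_i A k i * `|v 0 i| <= _).
    apply: ler_sum => k _; rewrite Hk; apply: le_trans (ler_norm_sum _ _ _) _.
    by apply: ler_sum => i _; rewrite normrM ger0_norm.
  rewrite exchange_big /S big_distrr /=; apply: ler_sum => i _.
  rewrite -big_distrl /= [leLHS]mulrC [leRHS]mulrC; apply: ler_wpM2l => //.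
have S00 : S <= 0.
  have : S * (1 - c) <= 0 by rewrite mulrBr mulr1 subr_le0 mulrC.
  by rewrite pmulr_lle0 // subr_gt0.
apply/rowP => k; rewrite mxE; apply/eqP; rewrite -normr_eq0 eq_le normr_ge0 andbT.
apply: le_trans S00; rewrite /S (bigD1 k) //= lerDl; exact: sumr_ge0.
Qed.

Lemma kron_sum_le1 (R : realFieldType) m n (x : 'cV[R]_n) k j :
  (forall i, 0 <= x i 0) -> \sum_(i < n) x i 0 <= 1 ->
  \sum_(t : {ffun 'I_(m.-1) -> 'I_n}) kron_summand x k t j <= 1.
Proof.
move=> x0 x1; rewrite /kron_summand.
rewrite -(bigA_distr_bigA (fun l a => if l == k then (a == j)%:R else x a 0)).
apply: prodr_ile1 => l _; case: (l == k).
  rewrite sumr_ge0 //= (bigD1 j) //= eqxx big1 ?addr0 //.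
  by move=> a /negbTE ->.
by rewrite sumr_ge0.
Qed.

Theorem proposition3p1 (R : realFieldType) (m n : nat) (P : tensor R m n)
  (x : 'cV[R]_n) (alpha : R) :
  (2 <= m)%N -> (1 <= n)%N ->
  transition_tensor P ->
  (forall i, 0 <= x i 0) -> \sum_(i < n) x i 0 <= 1 ->
  0 <= alpha -> alpha < 1 / (m - 1)%:R ->
  minusJ P x alpha \in unitmx.
Proof.
move=> m2 n1 [P0 P1] x0 x1 a0 a1.
have K0 t j : 0 <= \sum_(k < m.-1) kron_summand x k t j.
  apply: sumr_ge0 => k _; apply: prodr_ge0 => l _; case: (l == k) => //.
apply: (@dd_unit _ _ _ (alpha * (m - 1)%:R)).
- move=> i j; rewrite !mxE; apply: mulr_ge0 => //; apply: sumr_ge0 => t _.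
  exact: mulr_ge0.
- have mp : 0 < (m - 1)%:R :> R by rewrite ltr0n subn_gt0.
  by rewrite -ltr_pdivlMr // mul1r -[_ / _]mul1r.
- move=> j.
  under eq_bigr => i _ do rewrite !mxE.
  rewrite -big_distrr /= ler_wpM2l // exchange_big /=.
  under eq_bigr => t _ do rewrite -big_distrl /= P1 mul1r.
  rewrite exchange_big /= subn1.
  apply: le_trans (_ : \sum_(k < m.-1) (1 : R) <= _).
    by apply: ler_sum => k _; apply: kron_sum_le1.
  by rewrite sumr_const card_ord.
Qed.
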